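(* For all $s\in\mathcal{Q}$, the function $F_s$ is supported on a subset of $J_s$, and $F_s(c)=1$ for every extremal point $c$ of $J_s$.
   Context: $\mathcal{Q}=\mathbb{Q}^{\geq0}\cup\{\infty\}$; each $\sigma\in\mathcal{Q}$ is written uniquely $\sigma=q/p$ with $p,q\in\mathbb{N}$ coprime ($\infty=1/0$). For such $\sigma$: $J_\sigma=\{(\alpha,\beta)\in\mathbb{Z}^2:\ \alpha\equiv q,\ \beta\equiv p\pmod2;\ \alpha\geq-q;\ \beta\geq-p;\ \alpha+\beta\leq p+q-2;\ p\alpha+q\beta\geq0\}$, $P^\sigma_i=(q+2i,-p)$, $Q^\sigma_j=(-q,p+2j)$. The extremal points of $J_\sigma$ are $P^\sigma_0,P^\sigma_{p-1},Q^\sigma_0,Q^\sigma_{q-1}$ if $\sigma\notin\{0,\infty\}$, and the unique point of $J_\sigma$ if $\sigma\in\{0,\infty\}$. Parents: for $\sigma\in\mathcal{Q}\smallsetminus\{0,1,\infty\}$, let $L_\sigma$ be the hyperbolic geodesic in the upper half-plane from $\sigma$ to $\sqrt{-1}$; the parents of $\sigma$ are the endpoints of the first edge of the Farey triangulation (ideal triangles with vertices $\frac{q_0}{p_0},\frac{q_0+q_1}{p_0+p_1},\frac{q_1}{p_1}$, $q_0p_1-q_1p_0=\pm1$) crossed by $L_\sigma$, closest to $\sigma$; the parents of $1$ are $0$ and $\infty$. For $\sigma\notin\{0,1,\infty\}$ the parents are labelled $\sigma_0,\sigma_1$ so that the parents of $\sigma_1$ are $\sigma_0$ and another point $\sigma'\in\mathcal{Q}$.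 Let $\mathcal{F}$ be the set of finitely supported functions $\mathbb{Z}^2\to\mathbb{Z}$, with convolution $F*G(u)=\sum_{x+y=u}F(x)G(y)$; $1\!\!1_U$ is the indicator function of $U$; $\Lambda=\{(0,0),(0,2),(2,0)\}$. Define $F_\sigma=1\!\!1_{J_\sigma}$ for $\sigma\in\{0,1,\infty\}$, and recursively $F_\sigma=F_{\sigma_0}*F_{\sigma_1}*1\!\!1_\Lambda-F_{\sigma'}$ for $\sigma\in\mathcal{Q}\smallsetminus\{0,1,\infty\}$. *)

(* Defs.v *)
From mathcomp Require Import all_boot all_order all_algebra.
Set Implicit Arguments. Unset Strict Implicit. Unset Printing Implicit Defensive.
Import Order.TTheory GRing.Theory Num.Theory.
Local Open Scope ring_scope.

(* An element sigma = q/p of Q = Q_{>=0} u {oo} is represented by the pair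
   (q, p) of coprime naturals (0 = (0,1), oo = (1,0)). *)
Definition slope := (nat * nat)%type.

Definition point := (int * int)%type.
Definition padd (x y : point) : point := (x.1 + y.1, x.2 + y.2).

Definition inJ (s : slope) (u : point) : bool :=
  let q := (s.1)%:Z in let p := (s.2)%:Z in
  [&& (2 %| u.1 - q)%Z, (2 %| u.2 - p)%Z,
      - q <= u.1, - p <= u.2, u.1 + u.2 <= p + q - 2 &
      0 <= p * u.1 + q * u.2].

(* Finitely supported functions Z^2 -> Z, given as formal finite sums
   sum_k c_k [x_k]; [ev f] is the function they denote. *)
Definition fsf := seq (point * int).
Definition ev (f : fsf) (u : point) : int := \sum_(x <- f | x.1 == u) x.2.
(* convolution: ev (conv f g) u = sum_(x + y = u) ev f x * ev g y *)
Definition conv (f g : fsf) : fsf :=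
  [seq (padd x.1 y.1, x.2 * y.2) | x <- f, y <- g].
Definition fsub (f g : fsf) : fsf := f ++ [seq (x.1, - x.2) | x <- g].

(* indicator of J_sigma (J_sigma is contained in the box enumerated below) *)
Definition Jind (s : slope) : fsf :=
  let N := (s.1 + s.2)%N in
  let rng := [seq (i%:Z - N%:Z) | i <- iota 0 (3 * N).+1] in
  [seq (u, 1) | u <- [seq (a, b) | a <- rng, b <- rng] & inJ s u].

Definition Lam : fsf := [:: ((0, 0), 1); ((0, 2), 1); ((2, 0), 1)].

(* Farey (Stern--Brocot) parents of sigma = q/p: the unique decomposition
   q/p = (a + c)/(b + d) with a/b, c/d Farey neighbours (c*b - a*d = 1),
   i.e. the endpoints of the edge of the Farey triangle (a/b, q/p, c/d)
   first crossed by the geodesic from sigma to sqrt(-1). *)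
Definition lparent (s : slope) : slope :=
  let q := s.1 in let p := s.2 in
  head (0%N, 1%N)
    [seq ab <- [seq (a, b) | a <- iota 0 q.+1, b <- iota 0 p.+1] |
       ((q - ab.1) * ab.2 == ab.1 * (p - ab.2) + 1)%N].
Definition rparent (s : slope) : slope :=
  ((s.1 - (lparent s).1)%N, (s.2 - (lparent s).2)%N).

(* sigma_1 : the parent whose own parents contain the other parent sigma_0
   (it is the parent with the larger q + p);  sigma' : the other parent of
   sigma_1. *)
Definition par1 (s : slope) : slope :=
  if ((lparent s).1 + (lparent s).2 < (rparent s).1 + (rparent s).2)%N
  then rparent s else lparent s.
Definition par0 (s : slope) : slope :=
  if ((lparent s).1 + (lparent s).2 < (rparent s).1 + (rparent s).2)%N
  then lparent s else rparent s.
Definition parp (s : slope) : slope :=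
  let s1 := par1 s in
  if lparent s1 == par0 s then rparent s1 else lparent s1.

Definition is_base (s : slope) : bool :=
  (s == (0, 1)%N) || (s == (1, 1)%N) || (s == (1, 0)%N).

Fixpoint Fl (n : nat) (s : slope) : fsf :=
  match n with
  | 0 => [::]
  | n'.+1 =>
    if is_base s then Jind s
    else fsub (conv (conv (Fl n' (par0 s)) (Fl n' (par1 s))) Lam)
              (Fl n' (parp s))
  end.

(* F_sigma as a function Z^2 -> Z (fuel q + p suffices) *)
Definition F (s : slope) (u : point) : int := ev (Fl (s.1 + s.2) s) u.

Definition extremal (s : slope) (c : point) : bool :=
  let q := (s.1)%:Z in let p := (s.2)%:Z in
  if (s == (0, 1)%N) || (s == (1, 0)%N) then inJ s c
  else c \in [:: (q, - p); (q + 2 * (p - 1), - p);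
                 (- q, p); (- q, p + 2 * (q - 1))].

(* Main.v *)
Require Import Defs.
From mathcomp Require Import all_boot all_order all_algebra.
From mathcomp Require Import zify ring.
Set Implicit Arguments. Unset Strict Implicit. Unset Printing Implicit Defensive.
Import Order.TTheory GRing.Theory Num.Theory.

Definition lspec (q p : nat) (L : nat * nat) :=
  [/\ L.1 <= q, L.2 <= p & q * L.2 = L.1 * p + 1].

Lemma lparent_spec q p L : lspec q p L -> lspec q p (lparent (q, p)).
Proof.
case: L => a b; rewrite /lspec /= => -[ha hb he].
rewrite /lparent.
set l := [seq _ <- _ | _].
have : (a, b) \in l.
  rewrite mem_filter; apply/andP; split.
    have : a * b <= a * p by apply: leq_mul.
    rewrite /= mulnBl mulnBr; move=> ?; apply/eqP; lia.
  by apply: allpairs_f; rewrite mem_iota /=; lia.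
have : all (fun ab => [&& ab.1 <= q, ab.2 <= p & (q - ab.1) * ab.2 == ab.1 * (p - ab.2) + 1]) l.
  apply/allP => -[x y]; rewrite mem_filter => /andP[h1 /allpairsP[[x' y'] [h2 h3 hxy]]].
  case: hxy h1 h2 h3 => -> -> h1; rewrite !mem_iota => h2 h3; rewrite /= in h1 *; rewrite h1 andbT; move: h2 h3 => /= h2 h3; lia.
case: l => [//|[x y] l'] /= /andP[/and3P[hx hy /eqP hxy] _] _.
split=> //.
have : x * y <= x * p by apply: leq_mul.
move: hxy; rewrite mulnBl mulnBr; lia.
Qed.

Lemma lspec_uniq q p L L' : lspec q p L -> lspec q p L' -> L = L'.
Proof.
case: L L' => a b [a2 b2] [/= h1 h2 h3] [/= h4 h5 h6].
have F3 : (a%:Z * p%:Z = q%:Z * b%:Z - 1)%R by move: h3; lia.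
have F6 : (a2%:Z * p%:Z = q%:Z * b2%:Z - 1)%R by move: h6; lia.
have E1 : (q%:Z * (a%:Z * b2%:Z - a2%:Z * b%:Z) = a%:Z - a2%:Z)%R.
  have -> : (q%:Z * (a%:Z * b2%:Z - a2%:Z * b%:Z) = a%:Z * (q%:Z * b2%:Z) - a2%:Z * (q%:Z * b%:Z))%R.
    by ring.
  have -> : (q%:Z * b2%:Z = a2%:Z * p%:Z + 1)%R by lia.
  have -> : (q%:Z * b%:Z = a%:Z * p%:Z + 1)%R by lia.
  ring.
have E2 : (p%:Z * (a%:Z * b2%:Z - a2%:Z * b%:Z) = b%:Z - b2%:Z)%R.
  have -> : (p%:Z * (a%:Z * b2%:Z - a2%:Z * b%:Z) = b2%:Z * (a%:Z * p%:Z) - b%:Z * (a2%:Z * p%:Z))%R.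
    by ring.
  rewrite F3 F6; ring.
move: E1 E2; set D := (_ - _)%R => E1 E2.
suff [-> ->] : a = a2 /\ b = b2 by [].
have [hD|[hD|hD]] : (D = 0 \/ D >= 1 \/ D <= -1)%R by lia.
- by move: E1 E2; rewrite hD !GRing.mulr0; lia.
- nia.
- nia.
Qed.

Lemma lspec_exists q p : coprime q p -> 0 < q -> 0 < p -> exists L, lspec q p L.
Proof.
move=> cop q0 p0.
have [x hx /dvdnP[k hk]] := Bezoutl q p0.
move: hk; rewrite gcdnC (eqP cop) => hk.
have hkq : k <= q by nia.
exists (q - k, p - x); split => /=; try lia.
nia.
Qed.

Lemma nonbase_pos q p : coprime q p -> ~~ is_base (q, p) -> 0 < q /\ 0 < p.
Proof.
rewrite /is_base /coprime => /eqP cop; rewrite !xpair_eqE.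
case: q cop => [|q]; first by rewrite gcd0n => ->.
case: p => [|p]; first by rewrite gcdn0 => [[->]].
done.
Qed.

Lemma arith_lt a b c d : c * b = a * d + 1 -> a + b < c + d -> a <= c /\ b <= d.
Proof.
move=> e lt.
have h1 : a <= c.
  rewrite leqNgt; apply/negP => ac.
  have bd : b.+1 <= d by lia.
  have := leq_mul ac bd. nia.
split=> //.
rewrite leqNgt; apply/negP => db.
have ca : a.+1 <= c.+1 by lia.
have := leq_mul (leqnn (a.+1)) db.
nia.
Qed.
Lemma arith_ge a b c d : c * b = a * d + 1 -> ~~ (a + b < c + d) -> ~ (a = 0 /\ b = 1 /\ c = 1 /\ d = 0) -> c <= a /\ d <= b.
Proof.
move=> e ge n.
have h1 : c <= a.
  rewrite leqNgt; apply/negP => ac.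
  have bd : d.+1 <= b by lia.
  have := leq_mul ac bd. nia.
split=> //.
rewrite leqNgt; apply/negP => db.
have ca : c.+1 <= a by nia.
have := leq_mul ca db.
nia.
Qed.

Lemma parents_spec q p : coprime q p -> ~~ is_base (q, p) ->
  exists q0 p0 q' p', [/\ par0 (q, p) = (q0, p0), par1 (q, p) = (q0 + q', p0 + p'),
    parp (q, p) = (q', p'), q = 2 * q0 + q' /\ p = 2 * p0 + p' &
    (q' * p0 = q0 * p' + 1 \/ q0 * p' = q' * p0 + 1)].
Proof.
move=> cop nb; have [qpos ppos] := nonbase_pos cop nb.
have [L0 hL0] := lspec_exists cop qpos ppos.
have hL := lparent_spec hL0.
have nb11 : (q, p) != (1, 1) by move: nb; rewrite /is_base => /norP[/norP[]].
move: hL; rewrite /parp /par1 /par0 /rparent.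
case: (lparent (q, p)) => a b [/= ha hb he].
case: ifP => /= hlt.
- have e' : (q - a) * b = a * (p - b) + 1.
    have Eq : q = a + (q - a) by lia.
    have Ep : p = b + (p - b) by lia.
    move: he; rewrite {1}Eq {1}Ep mulnDl mulnDr; lia.
  have [h1 h2] := arith_lt e' hlt.
  have hs : lspec (q - a) (p - b) (a, b) by split.
  have -> : lparent (q - a, p - b) = (a, b) by apply: lspec_uniq (lparent_spec hs) hs.
  rewrite eqxx /=.
  exists a, b, (q - a - a), (p - b - b); split => //.
  + by congr (_, _); lia.
  + lia.
  + left; rewrite mulnBl mulnBr e'.
    have : a * b <= a * (p - b) by apply: leq_mul.
    lia.
- have e' : (q - a) * b = a * (p - b) + 1.
    have Eq : q = a + (q - a) by lia.
    have Ep : p = b + (p - b) by lia.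
    move: he; rewrite {1}Eq {1}Ep mulnDl mulnDr; lia.
  have [h1 h2] : q - a <= a /\ p - b <= b.
    apply: arith_ge e' _ _; first by rewrite hlt.
    move=> [ea [eb [ec ed]]]; move: nb11.
    have -> : q = 1 by lia.
    by have -> : p = 1 by lia.
  have hs : lspec a b (a - (q - a), b - (p - b)).
    split=> /=; try lia.
    have : (q - a) * b <= a * b by apply: leq_mul.
    rewrite e' => hh.
    rewrite mulnBr mulnBl e'.
    lia.
  have -> : lparent (a, b) = (a - (q - a), b - (p - b)) by apply: lspec_uniq (lparent_spec hs) hs.
  exists (q - a), (p - b), (a - (q - a)), (b - (p - b)).
  have E : (a - (a - (q - a)), b - (b - (p - b))) = (q - a, p - b) by congr (_, _); lia.
  split => //=.
  + by congr (_, _); lia.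
  + by case: eqP => [->|]; rewrite ?E.
  + lia.
  + right; rewrite mulnBr [(a - _) * _]mulnBl e'.
    have : (q - a) * (p - b) <= (q - a) * b by apply: leq_mul.
    have : (q - a) * (p - b) <= a * (p - b) by apply: leq_mul.
    lia.
Qed.

Local Open Scope ring_scope.

Definition psub (x y : point) : point := (x.1 - y.1, x.2 - y.2).

Lemma ev_cons (y : point * int) f u :
  ev (y :: f) u = (if y.1 == u then y.2 else 0) + ev f u.
Proof. by rewrite /ev big_cons; case: ifP => _ //; rewrite add0r. Qed.

Lemma ev_nil u : ev [::] u = 0.
Proof. by rewrite /ev big_nil. Qed.

Lemma ev_fsub f g u : ev (fsub f g) u = ev f u - ev g u.
Proof.
rewrite /fsub /ev big_cat /= big_map /= -sumrN.
by congr (_ + _); apply: eq_bigl.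
Qed.

Lemma ev_mul f u : ev f u = \sum_(x <- f) x.2 * (x.1 == u)%:R.
Proof.
rewrite /ev big_mkcond /=; apply: eq_bigr => x _.
by case: (x.1 == u); rewrite ?mulr1 ?mulr0.
Qed.

Lemma padd_eq (x y u : point) : (padd x y == u) = (y == psub u x).
Proof.
case: x y u => [x1 x2] [y1 y2] [u1 u2] /=.
rewrite /padd /psub /= !xpair_eqE.
by apply/andP/andP => -[/eqP h1 /eqP h2]; split; apply/eqP; lia.
Qed.

Lemma ev_conv f g u :
  ev (conv f g) u = \sum_(x <- f) x.2 * ev g (psub u x.1).
Proof.
rewrite ev_mul /conv big_allpairs_dep /=.
apply: eq_bigr => x _; rewrite ev_mul mulr_sumr; apply: eq_bigr => y _.
by rewrite padd_eq mulrA.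
Qed.

Lemma ev_conv2 f g u :
  ev (conv f g) u = \sum_(y <- g) ev f (psub u y.1) * y.2.
Proof.
rewrite ev_mul /conv big_allpairs_dep /= exchange_big /=.
apply: eq_bigr => y _; rewrite ev_mul mulr_suml; apply: eq_bigr => x _.
rewrite /psub /padd /=. 
have -> : ((x.1.1 + y.1.1, x.1.2 + y.1.2) == u) = (x.1 == (u.1 - y.1.1, u.2 - y.1.2)).
  case: x y u => [[x1 x2] xv] [[y1 y2] yv] [u1 u2] /=; rewrite !xpair_eqE.
  by apply/andP/andP => -[/eqP h1 /eqP h2]; split; apply/eqP; lia.
by rewrite -!mulrA [_ * _%:R]mulrC.
Qed.

Lemma ev_Lam h u :
  ev (conv h Lam) u = ev h u + ev h (psub u (0,2)) + ev h (psub u (2,0)).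
Proof.
rewrite ev_conv2 /Lam !big_cons big_nil !mulr1 addr0 addrA.
by congr (_ + _ + _); case: u => a b; rewrite /psub /= !subr0.
Qed.

Lemma sum_group f (H : point -> int) (s : seq point) :
  uniq s -> {subset map fst f <= s} ->
  \sum_(x <- f) x.2 * H x.1 = \sum_(a <- s) ev f a * H a.
Proof.
move=> us; elim: f => [|y f IH] sub.
  by rewrite big_nil big1 // => a _; rewrite ev_nil mul0r.
rewrite big_cons IH; last by move=> z hz; apply: sub; rewrite /= inE hz orbT.
have ys : y.1 \in s by apply: sub; rewrite /= inE eqxx.
under [RHS]eq_bigr => a _ do rewrite ev_cons mulrDl.
rewrite big_split /=; congr (_ + _).
rewrite (bigD1_seq y.1) //= eqxx big1 ?addr0 // => a /negbTE.
by rewrite eq_sym => ->; rewrite mul0r.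
Qed.

Lemma sum_single f (H : point -> int) a0 :
  (forall a, a != a0 -> ev f a * H a = 0) ->
  \sum_(x <- f) x.2 * H x.1 = ev f a0 * H a0.
Proof.
move=> h0.
rewrite (@sum_group f H (undup (map fst f))) ?undup_uniq //; last first.
  by move=> z; rewrite mem_undup.
case: (boolP (a0 \in undup (map fst f))) => ha.
  rewrite (bigD1_seq a0) ?undup_uniq //= big1_seq ?addr0 //.
  by move=> a /andP[hne _]; apply: h0.
rewrite big1_seq; last first.
  move=> a /andP[_ ha']; apply: h0; apply: contraNneq ha => <-; done.
have -> : ev f a0 = 0.
  rewrite /ev big1_seq // => x /andP[/eqP hx hxf].
  by move: ha; rewrite mem_undup -hx map_f.
by rewrite mul0r.
Qed.

Lemma ev_conv_single f g v a0 :
  (forall a, a != a0 -> ev f a * ev g (psub v a) = 0) ->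
  ev (conv f g) v = ev f a0 * ev g (psub v a0).
Proof. by move=> h; rewrite ev_conv (@sum_single f (fun a => ev g (psub v a)) a0). Qed.

Lemma inJ_P (q p : nat) (x y : int) :
  inJ (q, p) (x, y) <->
  [/\ (exists k, x - q%:Z = k * 2) /\ (exists k, y - p%:Z = k * 2),
      - q%:Z <= x, - p%:Z <= y, x + y <= p%:Z + q%:Z - 2 &
      0 <= p%:Z * x + q%:Z * y].
Proof.
rewrite /inJ /=; split.
  by move=> /andP[/dvdzP h1 /andP[/dvdzP h2 /and4P[h3 h4 h5 h6]]].
case=> [[h1 h2] h3 h4 h5 h6]; apply/andP; split; first by apply/dvdzP.
by apply/andP; split; [apply/dvdzP|apply/and4P].
Qed.

Lemma box_sum (q0 p0 q1 p1 : nat) (a1 a2 b1 b2 l1 l2 : int) :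
  inJ (q0, p0) (a1, a2) -> inJ (q1, p1) (b1, b2) ->
  (l1 = 0 /\ l2 = 0) \/ (l1 = 0 /\ l2 = 2) \/ (l1 = 2 /\ l2 = 0) ->
  0 <= (p0 + p1)%N%:Z * (a1 + b1 + l1) + (q0 + q1)%N%:Z * (a2 + b2 + l2) ->
  inJ (q0 + q1, p0 + p1)%N (a1 + b1 + l1, a2 + b2 + l2).
Proof.
move=> /inJ_P [[[k1 e1] [k2 e2]] h3 h4 h5 h6] /inJ_P [[[k3 e3] [k4 e4]] h7 h8 h9 h10] hl hpos.
apply/inJ_P; split => //; try lia; split.
- case: hl => [[-> _]|[[-> _]|[-> _]]]; [exists (k1 + k3)|exists (k1 + k3)|exists (k1 + k3 + 1)]; lia.
- case: hl => [[_ ->]|[[_ ->]|[_ ->]]]; [exists (k2 + k4)|exists (k2 + k4 + 1)|exists (k2 + k4)]; lia.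
Qed.

Lemma box_prime (q0 p0 q' p' : nat) (c1 c2 : int) :
  inJ (q', p') (c1, c2) ->
  0 <= (2 * p0 + p')%N%:Z * c1 + (2 * q0 + q')%N%:Z * c2 ->
  inJ (2 * q0 + q', 2 * p0 + p')%N (c1, c2).
Proof.
move=> /inJ_P [[[k1 e1] [k2 e2]] h3 h4 h5 h6] hpos.
apply/inJ_P; split => //; try lia; split.
- by exists (k1 - q0%:Z); lia.
- by exists (k2 - p0%:Z); lia.
Qed.

Lemma Mpar (a b : nat) (p q x y : int) :
  inJ (a, b) (x, y) -> exists m, p * x + q * y = p * a%:Z - q * b%:Z + 2 * m.
Proof.
move=> /inJ_P [[[k1 e1] [k2 e2]] _ _ _ _].
exists (q * b%:Z + p * k1 + q * k2).
have -> : x = a%:Z + k1 * 2 by lia.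
have -> : y = b%:Z + k2 * 2 by lia.
ring.
Qed.

Lemma Mneg (a b : nat) (p q x y : int) :
  inJ (a, b) (x, y) -> 1 <= p -> 1 <= q -> p * a%:Z - q * b%:Z < 0 ->
  p * a%:Z - q * b%:Z <= p * x + q * y /\
  (p * x + q * y = p * a%:Z - q * b%:Z -> x = a%:Z /\ y = - b%:Z).
Proof.
move=> /inJ_P [_ h3 h4 h5 h6] p1 q1 dneg.
set d := p * a%:Z - q * b%:Z.
have Id : b%:Z * (p * x + q * y - d) = p * (b%:Z * x + a%:Z * y) + (- d) * (y + b%:Z).
  rewrite /d; ring.
have g1 : 0 <= p * (b%:Z * x + a%:Z * y) by apply: mulr_ge0; lia.
have g2 : 0 <= (- d) * (y + b%:Z) by apply: mulr_ge0; lia.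
have bpos : 0 < b%:Z.
  have : 0 <= p * a%:Z by apply: mulr_ge0; lia.
  have : 0 <= q by lia.
  rewrite /d in dneg; nia.
split.
  have : 0 <= b%:Z * (p * x + q * y - d) by lia.
  nia.
move=> heq.
have z1 : p * (b%:Z * x + a%:Z * y) = 0 by move: Id; rewrite heq subrr mulr0; lia.
have z2 : (- d) * (y + b%:Z) = 0 by move: Id; rewrite heq subrr mulr0; lia.
have ey : y = - b%:Z.
  move: z2 => /eqP; rewrite mulf_eq0 => /orP[/eqP|/eqP]; lia.
split=> //.
move: z1 => /eqP; rewrite mulf_eq0 => /orP[/eqP|/eqP]; first lia.
rewrite ey => h.
have : b%:Z * (x - a%:Z) = 0 by rewrite -h; ring.
move/eqP; rewrite mulf_eq0 => /orP[/eqP|/eqP]; lia.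
Qed.

Lemma Mpos (a b : nat) (p q x y : int) :
  inJ (a, b) (x, y) -> 1 <= p -> 1 <= q -> 0 < p * a%:Z - q * b%:Z ->
  - (p * a%:Z - q * b%:Z) <= p * x + q * y /\
  (p * x + q * y = - (p * a%:Z - q * b%:Z) -> x = - a%:Z /\ y = b%:Z).
Proof.
move=> /inJ_P [_ h3 h4 h5 h6] p1 q1 dpos.
set d := p * a%:Z - q * b%:Z.
have Id : a%:Z * (p * x + q * y + d) = q * (b%:Z * x + a%:Z * y) + d * (x + a%:Z).
  rewrite /d; ring.
have g1 : 0 <= q * (b%:Z * x + a%:Z * y) by apply: mulr_ge0; lia.
have g2 : 0 <= d * (x + a%:Z) by apply: mulr_ge0; lia.
have apos : 0 < a%:Z.
  have : 0 <= q * b%:Z by apply: mulr_ge0; lia.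
  have : 0 <= p by lia.
  rewrite /d in dpos; nia.
split.
  have : 0 <= a%:Z * (p * x + q * y + d) by lia.
  nia.
move=> heq.
have z1 : q * (b%:Z * x + a%:Z * y) = 0 by move: Id; rewrite heq addNr mulr0; lia.
have z2 : d * (x + a%:Z) = 0 by move: Id; rewrite heq addNr mulr0; lia.
have ex : x = - a%:Z.
  move: z2 => /eqP; rewrite mulf_eq0 => /orP[/eqP|/eqP]; lia.
split=> //.
move: z1 => /eqP; rewrite mulf_eq0 => /orP[/eqP|/eqP]; first lia.
rewrite ex => h.
have : a%:Z * (y - b%:Z) = 0 by rewrite -h; ring.
move/eqP; rewrite mulf_eq0 => /orP[/eqP|/eqP]; lia.
Qed.

Lemma X1 (a b : nat) : (0 < b)%N -> extremal (a, b) (a%:Z, - b%:Z).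
Proof.
move=> hb; rewrite /extremal /= !xpair_eqE.
case: ifP => [/orP[/andP[/eqP -> /eqP ->]|/andP[_ /eqP hb0]]|_].
- by [].
- by rewrite hb0 in hb.
- by rewrite inE eqxx.
Qed.

Lemma X2 (a b : nat) : (0 < a)%N -> extremal (a, b) (- a%:Z, b%:Z).
Proof.
move=> ha; rewrite /extremal /= !xpair_eqE.
case: ifP => [/orP[/andP[/eqP ha0 _]|/andP[/eqP -> /eqP ->]]|_].
- by rewrite ha0 in ha.
- by [].
- by rewrite !inE eqxx !orbT.
Qed.

Lemma X3 (a b : nat) : extremal (a, b) (a%:Z + 2 * (b%:Z - 1), - b%:Z).
Proof.
rewrite /extremal /= !xpair_eqE.
case: ifP => [/orP[/andP[/eqP -> /eqP ->]|/andP[/eqP -> /eqP ->]]|_].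
- by [].
- by [].
- by rewrite !inE eqxx !orbT.
Qed.

Lemma X4 (a b : nat) : extremal (a, b) (- a%:Z, b%:Z + 2 * (a%:Z - 1)).
Proof.
rewrite /extremal /= !xpair_eqE.
case: ifP => [/orP[/andP[/eqP -> /eqP ->]|/andP[/eqP -> /eqP ->]]|_].
- by [].
- by [].
- by rewrite !inE eqxx !orbT.
Qed.

Definition ell (P Q : int) (u : point) := P * u.1 + Q * u.2.

Lemma pair_eq (x y : point) : x.1 = y.1 -> x.2 = y.2 -> x = y.
Proof. by case: x y => ? ? [? ?] /= -> ->. Qed.

Lemma prod_nz (x y : int) : x * y != 0 -> x != 0 /\ y != 0.
Proof. by rewrite mulf_eq0 negb_or => /andP[]. Qed.

Definition HCprop (G0 G1 C : point -> int) :=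
  forall v a0, (forall a, a != a0 -> G0 a * G1 (psub v a) = 0) ->
  C v = G0 a0 * G1 (psub v a0).

Lemma HC_zero G0 G1 C v : HCprop G0 G1 C ->
  (forall a, G0 a * G1 (psub v a) != 0 -> False) -> C v = 0.
Proof.
move=> HC h; rewrite (HC v (0, 0)).
  by apply/eqP; apply: contraT => /h.
by move=> a _; apply/eqP; apply: contraT => /h.
Qed.

Lemma HC_single G0 G1 C v a0 : HCprop G0 G1 C ->
  (forall a, G0 a * G1 (psub v a) != 0 -> a = a0) -> C v = G0 a0 * G1 (psub v a0).
Proof.
move=> HC h; apply: HC => a ha; apply/eqP; apply: contraT => /h ea.
by rewrite ea eqxx in ha.
Qed.

Lemma arithK (P Q Lu La Lb l1 l2 ma mb : int) :
  Lu = La + Lb + P * l1 + Q * l2 -> Lu < 0 -> -1 <= La -> La = -1 + 2 * ma ->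
  -1 <= Lb -> Lb = -1 + 2 * mb -> 1 <= P -> 1 <= Q ->
  (l1 = 0 /\ l2 = 0) \/ (l1 = 0 /\ l2 = 2) \/ (l1 = 2 /\ l2 = 0) ->
  [/\ l1 = 0, l2 = 0, La = -1 & Lb = -1].
Proof.
move=> El hLu ha1 ema hb1 emb P1 Q1 [[e1 e2]|[[e1 e2]|[e1 e2]]];
  rewrite e1 e2 ?mulr0 ?addr0 in El *; split; lia.
Qed.

Lemma support_core (q0 p0 q' p' : nat) (G0 G1 G' C : point -> int) (A B Cs : point) :
  let q1 := (q0 + q')%N in let p1 := (p0 + p')%N in
  let P := (p0 + p1)%N%:Z in let Q := (q0 + q1)%N%:Z in
  (forall u, G0 u != 0 -> inJ (q0, p0) u) ->
  (forall u, G1 u != 0 -> inJ (q1, p1) u) ->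
  (forall u, G' u != 0 -> inJ (q', p') u) ->
  (forall a, inJ (q0, p0) a -> -1 <= ell P Q a /\ (ell P Q a = -1 -> a = A) /\
       exists m, ell P Q a = -1 + 2 * m) ->
  (forall b, inJ (q1, p1) b -> -1 <= ell P Q b /\ (ell P Q b = -1 -> b = B) /\
       exists m, ell P Q b = -1 + 2 * m) ->
  (forall c, inJ (q', p') c -> -2 <= ell P Q c /\ (ell P Q c = -2 -> c = Cs) /\
       exists m, ell P Q c = 2 * m) ->
  padd A B = Cs -> G0 A = 1 -> G1 B = 1 -> G' Cs = 1 ->
  1 <= P -> 1 <= Q -> HCprop G0 G1 C ->
  forall u, ~~ inJ (q0 + q1, p0 + p1)%N u ->
  C u + C (psub u (0, 2)) + C (psub u (2, 0)) - G' u = 0.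
Proof.
move=> q1 p1 P Q s0 s1 s' hA hB hC hAB gA gB gC P1 Q1 HC [u1 u2] nJ.
have K : forall l1 l2 : int, (l1 = 0 /\ l2 = 0) \/ (l1 = 0 /\ l2 = 2) \/ (l1 = 2 /\ l2 = 0) ->
    forall a, G0 a * G1 (psub (psub (u1, u2) (l1, l2)) a) != 0 ->
    [/\ l1 = 0, l2 = 0, a = A & (u1, u2) = Cs].
  move=> l1 l2 hl [a1 a2] /prod_nz [/s0 ja /s1 jb].
  move: jb; rewrite /psub /=; set b1 := (_ - _ - _); set b2 := (_ - _ - _) => jb.
  have eu : (u1, u2) = (a1 + b1 + l1, a2 + b2 + l2) by congr (_, _); rewrite /b1 /b2; ring.
  have Lu : ell P Q (u1, u2) < 0.
    rewrite ltNge; apply/negP => hge; move: nJ; rewrite eu box_sum //.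
    by move: hge; rewrite eu /ell /=.
  have [ha1 [ha2 [ma ema]]] := hA _ ja.
  have [hb1 [hb2 [mb emb]]] := hB _ jb.
  have El : ell P Q (u1, u2) = ell P Q (a1, a2) + ell P Q (b1, b2) + P * l1 + Q * l2.
    by rewrite eu /ell /=; ring.
  have [el1 [el2 [eLa eLb]]] : [/\ l1 = 0, l2 = 0, ell P Q (a1, a2) = -1 & ell P Q (b1, b2) = -1].
    exact: arithK El Lu ha1 ema hb1 emb P1 Q1 hl.
  have eA := ha2 eLa; have eB := hb2 eLb.
  split => //; rewrite -hAB -eA -eB eu el1 el2 /padd /=.
  by rewrite !addr0.
have KC : G' (u1, u2) != 0 -> (u1, u2) = Cs.
  move=> /s' jc; have [hc1 [hc2 [mc emc]]] := hC _ jc.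
  apply: hc2.
  have Lu : ell P Q (u1, u2) < 0.
    rewrite ltNge; apply/negP => hge; move: nJ.
    have -> : (q0 + q1 = 2 * q0 + q')%N by rewrite /q1; lia.
    have -> : (p0 + p1 = 2 * p0 + p')%N by rewrite /p1; lia.
    rewrite box_prime //.
    move: hge; rewrite /ell /P /Q /p1 /q1 /=.
    have -> : (p0 + (p0 + p') = 2 * p0 + p')%N by lia.
    by have -> : (q0 + (q0 + q') = 2 * q0 + q')%N by lia.
  lia.
have Z2 : forall l1 l2 : int, (l1 = 0 /\ l2 = 2) \/ (l1 = 2 /\ l2 = 0) ->
    C (psub (u1, u2) (l1, l2)) = 0.
  move=> l1 l2 hl; apply: HC_zero HC _ => a /(K l1 l2 (or_intror hl)) [e1 e2 _ _].
  by case: hl => -[]; rewrite ?e1 ?e2.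
rewrite (Z2 0 2 (or_introl (conj erefl erefl))) (Z2 2 0 (or_intror (conj erefl erefl))).
rewrite !addr0.
case: (eqVneq (u1, u2) Cs) => [eu|neu].
- rewrite (@HC_single G0 G1 C (u1, u2) A HC); last first.
    move=> a ha.
    have := K 0 0 (or_introl (conj erefl erefl)) a.
    by rewrite /psub /= !subr0 => /(_ ha) [].
  have -> : psub (u1, u2) A = B.
    rewrite eu -hAB /psub /padd /=; apply: pair_eq => /=; ring.
  by rewrite gA gB eu gC mulr1 subrr.
- rewrite (@HC_zero G0 G1 C (u1, u2) HC); last first.
    move=> a ha.
    have := K 0 0 (or_introl (conj erefl erefl)) a.
    rewrite /psub /= !subr0 => /(_ ha) [_ _ _ eu].
    by rewrite eu eqxx in neu.
  have -> : G' (u1, u2) = 0.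
    apply/eqP; apply: contraT => /KC eu.
    by rewrite eu eqxx in neu.
  by rewrite subrr.
Qed.

Lemma psub0 u : psub u (0, 0) = u.
Proof. by case: u => x y; rewrite /psub /= !subr0. Qed.

Lemma ext2 (q0 p0 q' p' : nat) (G0 G1 G' C : point -> int) :
  let q1 := (q0 + q')%N in let p1 := (p0 + p')%N in
  (forall u, G0 u != 0 -> inJ (q0, p0) u) ->
  (forall c, extremal (q0, p0) c -> G0 c = 1) ->
  (forall u, G1 u != 0 -> inJ (q1, p1) u) ->
  (forall c, extremal (q1, p1) c -> G1 c = 1) ->
  (forall u, G' u != 0 -> inJ (q', p') u) ->
  (0 < q0 + p0)%N -> HCprop G0 G1 C ->
  let c := ((q0 + q1)%N%:Z + 2 * ((p0 + p1)%N%:Z - 1), - (p0 + p1)%N%:Z) in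
  C c + C (psub c (0, 2)) + C (psub c (2, 0)) - G' c = 1.
Proof.
move=> q1 p1 s0 e0 s1 e1 s' pos0 HC c.
have D : forall l1 l2 : int, (l1 = 0 /\ l2 = 0) \/ (l1 = 0 /\ l2 = 2) \/ (l1 = 2 /\ l2 = 0) ->
    forall a, G0 a * G1 (psub (psub c (l1, l2)) a) != 0 ->
    [/\ l1 = 2, l2 = 0 & a = (q0%:Z + 2 * (p0%:Z - 1), - p0%:Z)].
  move=> l1 l2 hl [a1 a2] /prod_nz [/s0 /inJ_P [_ h3 h4 h5 h6] /s1].
  rewrite /psub /c /= => /inJ_P [_ h7 h8 h9 h10].
  have [el1 el2] : l1 = 2 /\ l2 = 0.
    by case: hl => [[? ?]|[[? ?]|[? ?]]]; split; lia.
  split => //; apply: pair_eq => /=; rewrite el1 el2 in h7 h8 h9 h10; lia.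
rewrite -{1}[c]psub0.
rewrite (@HC_zero G0 G1 C _ HC); last by move=> a /(D 0 0 (or_introl (conj erefl erefl))) [].
rewrite (@HC_zero G0 G1 C _ HC); last first.
  by move=> a /(D 0 2 (or_intror (or_introl (conj erefl erefl)))) [].
rewrite (@HC_single G0 G1 C _ (q0%:Z + 2 * (p0%:Z - 1), - p0%:Z) HC); last first.
  by move=> a /(D 2 0 (or_intror (or_intror (conj erefl erefl)))) [].
rewrite e0 ?X3 // e1; last first.
  have -> : psub (psub c (2, 0)) (q0%:Z + 2 * (p0%:Z - 1), - p0%:Z) =
            (q1%:Z + 2 * (p1%:Z - 1), - p1%:Z).
    by apply: pair_eq; rewrite /c /psub /= /q1 /p1; lia.
  exact: X3.
have -> : G' c = 0.
  apply/eqP; apply: contraT => /s'; rewrite /c => /inJ_P [_ h3 h4 h5 h6].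
  rewrite /q1 /p1 in h3 h4 h5 h6; lia.
lia.
Qed.

Lemma ext1 (q0 p0 q' p' : nat) (G0 G1 G' C : point -> int) :
  let q1 := (q0 + q')%N in let p1 := (p0 + p')%N in
  (forall u, G0 u != 0 -> inJ (q0, p0) u) ->
  (forall c, extremal (q0, p0) c -> G0 c = 1) ->
  (forall u, G1 u != 0 -> inJ (q1, p1) u) ->
  (forall c, extremal (q1, p1) c -> G1 c = 1) ->
  (forall u, G' u != 0 -> inJ (q', p') u) ->
  (q' * p0 = q0 * p' + 1 \/ q0 * p' = q' * p0 + 1)%N -> HCprop G0 G1 C ->
  let c := ((q0 + q1)%N%:Z, - (p0 + p1)%N%:Z) in
  C c + C (psub c (0, 2)) + C (psub c (2, 0)) - G' c = 1.
Proof.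
move=> q1 p1 s0 e0 s1 e1 s' He HC c.
case: (posnP p0) => [hp0|hp0].
-
  have [hq0 hp'] : q0 = 1%N /\ p' = 1%N.
    by move: He; rewrite hp0 muln0; case=> h; [lia | move: h; rewrite addn1 => /eqP; rewrite muln_eq1 => /andP[/eqP -> /eqP ->]].
  have D : forall l1 l2 : int, (l1 = 0 /\ l2 = 0) \/ (l1 = 0 /\ l2 = 2) \/ (l1 = 2 /\ l2 = 0) ->
      forall a, G0 a * G1 (psub (psub c (l1, l2)) a) != 0 ->
      [/\ l1 = 2, l2 = 0 & a = (-1, 0)].
    move=> l1 l2 hl [a1 a2] /prod_nz [/s0 /inJ_P [_ h3 h4 h5 h6] /s1].
    rewrite /psub /c /= => /inJ_P [_ h7 h8 h9 h10].
    rewrite /q1 /p1 hq0 hp0 hp' in h3 h4 h5 h7 h8 h9.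
    have [el1 el2] : l1 = 2 /\ l2 = 0.
      by case: hl => [[? ?]|[[? ?]|[? ?]]]; split; lia.
    split => //; apply: pair_eq => /=; rewrite el1 el2 in h7 h8 h9; lia.
  rewrite -{1}[c]psub0.
  rewrite (@HC_zero G0 G1 C _ HC); last by move=> a /(D 0 0 (or_introl (conj erefl erefl))) [].
  rewrite (@HC_zero G0 G1 C _ HC); last first.
    by move=> a /(D 0 2 (or_intror (or_introl (conj erefl erefl)))) [].
  rewrite (@HC_single G0 G1 C _ (-1, 0) HC); last first.
    by move=> a /(D 2 0 (or_intror (or_intror (conj erefl erefl)))) [].
  rewrite e0; last by rewrite hq0 hp0.
  rewrite e1; last first.
    have -> : psub (psub c (2, 0)) (-1, 0) = (q1%:Z, - p1%:Z).
      by apply: pair_eq; rewrite /c /psub /= /q1 /p1; lia.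
    by apply: X1; rewrite /p1; lia.
  have -> : G' c = 0.
    apply/eqP; apply: contraT => /s'; rewrite /c => /inJ_P [_ h3 h4 h5 h6].
    rewrite /q1 /p1 in h3 h4 h5 h6; lia.
  lia.
- have D : forall l1 l2 : int, (l1 = 0 /\ l2 = 0) \/ (l1 = 0 /\ l2 = 2) \/ (l1 = 2 /\ l2 = 0) ->
      forall a, G0 a * G1 (psub (psub c (l1, l2)) a) != 0 ->
      [/\ l1 = 0, l2 = 0 & a = (q0%:Z, - p0%:Z)].
    move=> l1 l2 hl [a1 a2] /prod_nz [/s0 /inJ_P [_ h3 h4 h5 h6] /s1].
    rewrite /psub /c /= => /inJ_P [_ h7 h8 h9 h10].
    rewrite /q1 /p1 in h7 h8 h9 h10.
    have el2 : l2 = 0 by case: hl => [[? ?]|[[? ?]|[? ?]]]; lia.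
    have ea2 : a2 = - p0%:Z by lia.
    have ha1 : q0%:Z <= a1.
      rewrite ea2 in h6; have : (0 < p0%:Z)%R by lia.
      nia.
    have hb1 : (q0 + q')%N%:Z <= (q0 + (q0 + q'))%N%:Z - l1 - a1.
      have eb2 : - (p0 + (p0 + p'))%N%:Z - l2 - a2 = - (p0 + p')%N%:Z by lia.
      rewrite eb2 in h10; have : (0 < (p0 + p')%N%:Z)%R by lia.
      nia.
    have el1 : l1 = 0 by case: hl => [[? ?]|[[? ?]|[? ?]]]; lia.
    split => //; apply: pair_eq => /=; lia.
  rewrite -{1}[c]psub0.
  rewrite (@HC_single G0 G1 C _ (q0%:Z, - p0%:Z) HC); last first.
    by move=> a /(D 0 0 (or_introl (conj erefl erefl))) [].
  rewrite (@HC_zero G0 G1 C _ HC); last first.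
    by move=> a /(D 0 2 (or_intror (or_introl (conj erefl erefl)))) [].
  rewrite (@HC_zero G0 G1 C _ HC); last first.
    by move=> a /(D 2 0 (or_intror (or_intror (conj erefl erefl)))) [].
  rewrite e0; last exact: X1.
  rewrite e1; last first.
    have -> : psub (psub c (0, 0)) (q0%:Z, - p0%:Z) = (q1%:Z, - p1%:Z).
      by apply: pair_eq; rewrite /c /psub /= /q1 /p1; lia.
    by apply: X1; rewrite /p1; lia.
  have -> : G' c = 0.
    apply/eqP; apply: contraT => /s'; rewrite /c => /inJ_P [_ h3 h4 h5 h6].
    rewrite /q1 /p1 in h3 h4 h5 h6; lia.
  lia.
Qed.

Lemma ext4 (q0 p0 q' p' : nat) (G0 G1 G' C : point -> int) :
  let q1 := (q0 + q')%N in let p1 := (p0 + p')%N in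
  (forall u, G0 u != 0 -> inJ (q0, p0) u) ->
  (forall c, extremal (q0, p0) c -> G0 c = 1) ->
  (forall u, G1 u != 0 -> inJ (q1, p1) u) ->
  (forall c, extremal (q1, p1) c -> G1 c = 1) ->
  (forall u, G' u != 0 -> inJ (q', p') u) ->
  (0 < q0 + p0)%N -> HCprop G0 G1 C ->
  let c := (- (q0 + q1)%N%:Z, (p0 + p1)%N%:Z + 2 * ((q0 + q1)%N%:Z - 1)) in
  C c + C (psub c (0, 2)) + C (psub c (2, 0)) - G' c = 1.
Proof.
move=> q1 p1 s0 e0 s1 e1 s' pos0 HC c.
have D : forall l1 l2 : int, (l1 = 0 /\ l2 = 0) \/ (l1 = 0 /\ l2 = 2) \/ (l1 = 2 /\ l2 = 0) ->
    forall a, G0 a * G1 (psub (psub c (l1, l2)) a) != 0 ->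
    [/\ l1 = 0, l2 = 2 & a = (- q0%:Z, p0%:Z + 2 * (q0%:Z - 1))].
  move=> l1 l2 hl [a1 a2] /prod_nz [/s0 /inJ_P [_ h3 h4 h5 h6] /s1].
  rewrite /psub /c /= => /inJ_P [_ h7 h8 h9 h10].
  have [el1 el2] : l1 = 0 /\ l2 = 2.
    by case: hl => [[? ?]|[[? ?]|[? ?]]]; split; lia.
  split => //; apply: pair_eq => /=; rewrite el1 el2 in h7 h8 h9 h10; lia.
rewrite -{1}[c]psub0.
rewrite (@HC_zero G0 G1 C _ HC); last by move=> a /(D 0 0 (or_introl (conj erefl erefl))) [].
rewrite (@HC_single G0 G1 C _ (- q0%:Z, p0%:Z + 2 * (q0%:Z - 1)) HC); last first.
  by move=> a /(D 0 2 (or_intror (or_introl (conj erefl erefl)))) [].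
rewrite (@HC_zero G0 G1 C (psub c (2, 0)) HC); last first.
  by move=> a /(D 2 0 (or_intror (or_intror (conj erefl erefl)))) [].
rewrite e0 ?X4 // e1; last first.
  have -> : psub (psub c (0, 2)) (- q0%:Z, p0%:Z + 2 * (q0%:Z - 1)) =
            (- q1%:Z, p1%:Z + 2 * (q1%:Z - 1)).
    by apply: pair_eq; rewrite /c /psub /= /q1 /p1; lia.
  exact: X4.
have -> : G' c = 0.
  apply/eqP; apply: contraT => /s'; rewrite /c => /inJ_P [_ h3 h4 h5 h6].
  rewrite /q1 /p1 in h3 h4 h5 h6; lia.
lia.
Qed.

Lemma ext3 (q0 p0 q' p' : nat) (G0 G1 G' C : point -> int) :
  let q1 := (q0 + q')%N in let p1 := (p0 + p')%N in
  (forall u, G0 u != 0 -> inJ (q0, p0) u) ->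
  (forall c, extremal (q0, p0) c -> G0 c = 1) ->
  (forall u, G1 u != 0 -> inJ (q1, p1) u) ->
  (forall c, extremal (q1, p1) c -> G1 c = 1) ->
  (forall u, G' u != 0 -> inJ (q', p') u) ->
  (q' * p0 = q0 * p' + 1 \/ q0 * p' = q' * p0 + 1)%N -> HCprop G0 G1 C ->
  let c := (- (q0 + q1)%N%:Z, (p0 + p1)%N%:Z) in
  C c + C (psub c (0, 2)) + C (psub c (2, 0)) - G' c = 1.
Proof.
move=> q1 p1 s0 e0 s1 e1 s' He HC c.
case: (posnP q0) => [hq0|hq0].
- have [hp0 hq'] : p0 = 1%N /\ q' = 1%N.
    move: He; rewrite hq0 mul0n; case=> h; last lia.
    by move: h; rewrite addn1 => /eqP; rewrite muln_eq1 => /andP[/eqP -> /eqP ->].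
  have D : forall l1 l2 : int, (l1 = 0 /\ l2 = 0) \/ (l1 = 0 /\ l2 = 2) \/ (l1 = 2 /\ l2 = 0) ->
      forall a, G0 a * G1 (psub (psub c (l1, l2)) a) != 0 ->
      [/\ l1 = 0, l2 = 2 & a = (0, -1)].
    move=> l1 l2 hl [a1 a2] /prod_nz [/s0 /inJ_P [_ h3 h4 h5 h6] /s1].
    rewrite /psub /c /= => /inJ_P [_ h7 h8 h9 h10].
    rewrite /q1 /p1 hq0 hp0 hq' in h3 h4 h5 h7 h8 h9.
    have [el1 el2] : l1 = 0 /\ l2 = 2.
      by case: hl => [[? ?]|[[? ?]|[? ?]]]; split; lia.
    split => //; apply: pair_eq => /=; rewrite el1 el2 in h7 h8 h9; lia.
  rewrite -{1}[c]psub0.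
  rewrite (@HC_zero G0 G1 C _ HC); last by move=> a /(D 0 0 (or_introl (conj erefl erefl))) [].
  rewrite (@HC_single G0 G1 C _ (0, -1) HC); last first.
    by move=> a /(D 0 2 (or_intror (or_introl (conj erefl erefl)))) [].
  rewrite (@HC_zero G0 G1 C (psub c (2, 0)) HC); last first.
    by move=> a /(D 2 0 (or_intror (or_intror (conj erefl erefl)))) [].
  rewrite e0; last by rewrite hq0 hp0.
  rewrite e1; last first.
    have -> : psub (psub c (0, 2)) (0, -1) = (- q1%:Z, p1%:Z).
      by apply: pair_eq; rewrite /c /psub /= /q1 /p1; lia.
    by apply: X2; rewrite /q1; lia.
  have -> : G' c = 0.
    apply/eqP; apply: contraT => /s'; rewrite /c => /inJ_P [_ h3 h4 h5 h6].
    rewrite /q1 /p1 in h3 h4 h5 h6; lia.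
  lia.
- have D : forall l1 l2 : int, (l1 = 0 /\ l2 = 0) \/ (l1 = 0 /\ l2 = 2) \/ (l1 = 2 /\ l2 = 0) ->
      forall a, G0 a * G1 (psub (psub c (l1, l2)) a) != 0 ->
      [/\ l1 = 0, l2 = 0 & a = (- q0%:Z, p0%:Z)].
    move=> l1 l2 hl [a1 a2] /prod_nz [/s0 /inJ_P [_ h3 h4 h5 h6] /s1].
    rewrite /psub /c /= => /inJ_P [_ h7 h8 h9 h10].
    rewrite /q1 /p1 in h7 h8 h9 h10.
    have el1 : l1 = 0 by case: hl => [[? ?]|[[? ?]|[? ?]]]; lia.
    have ea1 : a1 = - q0%:Z by lia.
    have ha2 : p0%:Z <= a2.
      rewrite ea1 in h6; have : (0 < q0%:Z)%R by lia.
      nia.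
    have hb2 : (p0 + p')%N%:Z <= (p0 + (p0 + p'))%N%:Z - l2 - a2.
      have eb1 : - (q0 + (q0 + q'))%N%:Z - l1 - a1 = - (q0 + q')%N%:Z by lia.
      rewrite eb1 in h10; have : (0 < (q0 + q')%N%:Z)%R by lia.
      nia.
    have el2 : l2 = 0 by case: hl => [[? ?]|[[? ?]|[? ?]]]; lia.
    split => //; apply: pair_eq => /=; lia.
  rewrite -{1}[c]psub0.
  rewrite (@HC_single G0 G1 C _ (- q0%:Z, p0%:Z) HC); last first.
    by move=> a /(D 0 0 (or_introl (conj erefl erefl))) [].
  rewrite (@HC_zero G0 G1 C _ HC); last first.
    by move=> a /(D 0 2 (or_intror (or_introl (conj erefl erefl)))) [].
  rewrite (@HC_zero G0 G1 C _ HC); last first.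
    by move=> a /(D 2 0 (or_intror (or_intror (conj erefl erefl)))) [].
  rewrite e0; last exact: X2.
  rewrite e1; last first.
    have -> : psub (psub c (0, 0)) (- q0%:Z, p0%:Z) = (- q1%:Z, p1%:Z).
      by apply: pair_eq; rewrite /c /psub /= /q1 /p1; lia.
    by apply: X2; rewrite /q1; lia.
  have -> : G' c = 0.
    apply/eqP; apply: contraT => /s'; rewrite /c => /inJ_P [_ h3 h4 h5 h6].
    rewrite /q1 /p1 in h3 h4 h5 h6; lia.
  lia.
Qed.

Definition Inv (s : slope) (G : point -> int) :=
  (forall u, G u != 0 -> inJ s u) /\ (forall c, extremal s c -> G c = 1).

Lemma core (q0 p0 q' p' : nat) (G0 G1 G' C : point -> int) :
  Inv (q0, p0) G0 -> Inv (q0 + q', p0 + p')%N G1 -> Inv (q', p') G' ->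
  (q' * p0 = q0 * p' + 1 \/ q0 * p' = q' * p0 + 1)%N -> HCprop G0 G1 C ->
  Inv (q0 + (q0 + q'), p0 + (p0 + p'))%N
    (fun u => C u + C (psub u (0, 2)) + C (psub u (2, 0)) - G' u).
Proof.
move=> [s0 e0] [s1 e1] [s' e'] He HC.
have pos0 : (0 < q0 + p0)%N by case: He => h; nia.
have Q1 : 1 <= (q0 + (q0 + q'))%N%:Z by case: He => h; nia.
have P1 : 1 <= (p0 + (p0 + p'))%N%:Z by case: He => h; nia.
split.
- move=> u; apply: contraR => nJ; apply/eqP.
  case: He => He.
  + apply: (@support_core q0 p0 q' p' G0 G1 G' C (q0%:Z, - p0%:Z)
        (- (q0 + q')%N%:Z, (p0 + p')%N%:Z) (- q'%:Z, p'%:Z)) => //.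
    * move=> a; case: a => x y ja.
      have d : (p0 + (p0 + p'))%N%:Z * q0%:Z - (q0 + (q0 + q'))%N%:Z * p0%:Z = -1 by nia.
      have [m em] := Mpar (p0 + (p0 + p'))%N%:Z (q0 + (q0 + q'))%N%:Z ja.
      have [h1 h2] := Mneg ja P1 Q1 ltac:(lia).
      rewrite /ell /=; split; first lia.
      split; first by move=> h; have [-> ->] := h2 ltac:(lia).
      by exists m; lia.
    * move=> b; case: b => x y jb.
      have d : (p0 + (p0 + p'))%N%:Z * (q0 + q')%N%:Z - (q0 + (q0 + q'))%N%:Z * (p0 + p')%N%:Z = 1 by nia.
      have [m em] := Mpar (p0 + (p0 + p'))%N%:Z (q0 + (q0 + q'))%N%:Z jb.
      have [h1 h2] := Mpos jb P1 Q1 ltac:(lia).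
      rewrite /ell /=; split; first lia.
      split; first by move=> h; have [-> ->] := h2 ltac:(lia).
      by exists (m + 1); lia.
    * move=> c; case: c => x y jc.
      have d : (p0 + (p0 + p'))%N%:Z * q'%:Z - (q0 + (q0 + q'))%N%:Z * p'%:Z = 2 by nia.
      have [m em] := Mpar (p0 + (p0 + p'))%N%:Z (q0 + (q0 + q'))%N%:Z jc.
      have [h1 h2] := Mpos jc P1 Q1 ltac:(lia).
      rewrite /ell /=; split; first lia.
      split; first by move=> h; have [-> ->] := h2 ltac:(lia).
      by exists (m + 1); lia.
    * by apply: pair_eq; rewrite /padd /=; lia.
    * by apply: e0; apply: X1; nia.
    * by apply: e1; apply: X2; nia.
    * by apply: e'; apply: X2; nia.
  + apply: (@support_core q0 p0 q' p' G0 G1 G' C (- q0%:Z, p0%:Z)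
        ((q0 + q')%N%:Z, - (p0 + p')%N%:Z) (q'%:Z, - p'%:Z)) => //.
    * move=> a; case: a => x y ja.
      have d : (p0 + (p0 + p'))%N%:Z * q0%:Z - (q0 + (q0 + q'))%N%:Z * p0%:Z = 1 by nia.
      have [m em] := Mpar (p0 + (p0 + p'))%N%:Z (q0 + (q0 + q'))%N%:Z ja.
      have [h1 h2] := Mpos ja P1 Q1 ltac:(lia).
      rewrite /ell /=; split; first lia.
      split; first by move=> h; have [-> ->] := h2 ltac:(lia).
      by exists (m + 1); lia.
    * move=> b; case: b => x y jb.
      have d : (p0 + (p0 + p'))%N%:Z * (q0 + q')%N%:Z - (q0 + (q0 + q'))%N%:Z * (p0 + p')%N%:Z = -1 by nia.
      have [m em] := Mpar (p0 + (p0 + p'))%N%:Z (q0 + (q0 + q'))%N%:Z jb.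
      have [h1 h2] := Mneg jb P1 Q1 ltac:(lia).
      rewrite /ell /=; split; first lia.
      split; first by move=> h; have [-> ->] := h2 ltac:(lia).
      by exists m; lia.
    * move=> c; case: c => x y jc.
      have d : (p0 + (p0 + p'))%N%:Z * q'%:Z - (q0 + (q0 + q'))%N%:Z * p'%:Z = -2 by nia.
      have [m em] := Mpar (p0 + (p0 + p'))%N%:Z (q0 + (q0 + q'))%N%:Z jc.
      have [h1 h2] := Mneg jc P1 Q1 ltac:(lia).
      rewrite /ell /=; split; first lia.
      split; first by move=> h; have [-> ->] := h2 ltac:(lia).
      by exists (m - 1); lia.
    * by apply: pair_eq; rewrite /padd /=; lia.
    * by apply: e0; apply: X2; nia.
    * by apply: e1; apply: X1; nia.
    * by apply: e'; apply: X1; nia.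
- move=> c; rewrite /extremal /= !xpair_eqE.
  have -> : ((q0 + (q0 + q'))%N == 0%N) = false by apply/negbTE; lia.
  have -> : ((p0 + (p0 + p'))%N == 0%N) = false by apply/negbTE; lia.
  rewrite andbF /= !inE => /or4P[] /eqP ->.
  + exact: (ext1 s0 e0 s1 e1 s' He HC).
  + exact: (ext2 s0 e0 s1 e1 s' pos0 HC).
  + exact: (ext3 s0 e0 s1 e1 s' He HC).
  + exact: (ext4 s0 e0 s1 e1 s' pos0 HC).
Qed.

Lemma Inv_ext s (G H : point -> int) : (forall u, G u = H u) -> Inv s G -> Inv s H.
Proof. by move=> e [h1 h2]; split=> [u|c]; rewrite -e; [apply: h1|apply: h2]. Qed.

Lemma J11 : Jind (1,1)%N = [:: ((-1,1),1); ((1,-1),1)].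
Proof. vm_compute. reflexivity. Qed.
Lemma J01 : Jind (0,1)%N = [:: ((0,-1),1)].
Proof. vm_compute. reflexivity. Qed.
Lemma J10 : Jind (1,0)%N = [:: ((-1,0),1)].
Proof. vm_compute. reflexivity. Qed.

Lemma base_inv s : is_base s -> Inv s (ev (Jind s)).
Proof.
rewrite /is_base => /orP[/orP[]|] /eqP ->.
- rewrite J01; split.
    by move=> u; rewrite ev_cons ev_nil addr0; case: ifP => [/eqP <- //|_]; rewrite eqxx.
  move=> [x y]; rewrite /extremal /= => /inJ_P [_ h3 h4 h5 h6].
  have -> : (x, y) = (0, -1) by apply: pair_eq => /=; lia.
  by rewrite ev_cons ev_nil.
- rewrite J11; split.
    move=> u; rewrite !ev_cons ev_nil addr0.
    by case: ifP => [/eqP <- //|_]; case: ifP => [/eqP <- //|_]; rewrite add0r eqxx.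
  move=> c; rewrite /extremal /= !inE => /or4P[] /eqP ->; by rewrite !ev_cons ev_nil.
- rewrite J10; split.
    by move=> u; rewrite ev_cons ev_nil addr0; case: ifP => [/eqP <- //|_]; rewrite eqxx.
  move=> [x y]; rewrite /extremal /= => /inJ_P [_ h3 h4 h5 h6].
  have -> : (x, y) = (-1, 0) by apply: pair_eq => /=; lia.
  by rewrite ev_cons ev_nil.
Qed.

Lemma coprime_det a b c d : (a * d = c * b + 1 \/ c * b = a * d + 1)%N -> coprime a b.
Proof.
move=> h; rewrite /coprime -dvdn1.
have g1 : (gcdn a b %| a * d)%N by apply: dvdn_mulr; apply: dvdn_gcdl.
have g2 : (gcdn a b %| c * b)%N by apply: dvdn_mull; apply: dvdn_gcdr.
case: h => h.
- by move: g1; rewrite h dvdn_addr.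
- by move: g2; rewrite h dvdn_addr.
Qed.

Lemma main n : forall q p, coprime q p -> (q + p <= n)%N -> Inv (q, p) (ev (Fl n (q, p))).
Proof.
elim: n => [|n IH] q p cop hn.
  have eq0 : q = 0%N by lia.
  have ep0 : p = 0%N by lia.
  by move: cop; rewrite eq0 ep0.
rewrite /=; case: ifP => hb; first exact: base_inv.
have [q0 [p0 [q' [p' [E0 E1 E' [Eq Ep] He]]]]] := parents_spec cop (negbT hb).
rewrite E0 E1 E'.
have c0 : coprime q0 p0 by apply: (@coprime_det q0 p0 q' p'); case: He; auto.
have c' : coprime q' p' by apply: (@coprime_det q' p' q0 p0); case: He; auto.
have c1 : coprime (q0 + q') (p0 + p') by apply: (@coprime_det _ _ q0 p0); case: He => h; [left|right]; nia.
have I0 := IH _ _ c0 ltac:(nia).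
have I1 := IH _ _ c1 ltac:(nia).
have I' := IH _ _ c' ltac:(nia).
have HC : HCprop (ev (Fl n (q0, p0))) (ev (Fl n (q0 + q', p0 + p')%N)) (ev (conv (Fl n (q0, p0)) (Fl n (q0 + q', p0 + p')%N))).
  by move=> v a0 h; apply: ev_conv_single.
have := core I0 I1 I' He HC.
have -> : (q0 + (q0 + q') = q)%N by lia.
have -> : (p0 + (p0 + p') = p)%N by lia.
apply: Inv_ext => u.
by rewrite ev_fsub ev_Lam.
Qed.

Theorem lemma8 (q p : nat) (hqp : coprime q p) :
  (forall u : point, F (q, p) u != 0 -> inJ (q, p) u) /\
  (forall c : point, extremal (q, p) c -> F (q, p) c = 1).
Proof. exact: (main hqp (leqnn _)). Qed.
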